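(* Let $ZM(m,n,r)$ be a ZM-group with $m=p^{\alpha}$ and $n=q_1^{\beta_1}q_2^{\beta_2}\cdots q_s^{\beta_s}$, where $p,q_1,\dots,q_s$ are primes ($q_1,\dots,q_s$ distinct) and $\alpha,\beta_1,\dots,\beta_s$ are positive integers. Let $A=\{i\in\{1,\dots,s\} : q_i\mid p-1\}$. If $\alpha\ge \max_{i\in A}\beta_i$, then $ZM(m,n,r)$ is not $\psi$-divisible.
   Context: For a finite group $G$, $\psi(G)=\sum_{x\in G} o(x)$ denotes the sum of the orders of all elements of $G$. A finite group $G$ is called $\psi$-divisible if $\psi(H)$ divides $\psi(G)$ for every subgroup $H$ of $G$. For positive integers $m,n,r$ with $\gcd(m,n)=\gcd(m,r-1)=1$ and $r^n\equiv 1\pmod m$, the ZM-group is $ZM(m,n,r)=\langle a,b \mid a^m=b^n=1,\ b^{-1}ab=a^r\rangle$, a group of order $mn$. *)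

(* Defs.v *)
From mathcomp Require Import all_boot all_order all_fingroup.
Set Implicit Arguments. Unset Strict Implicit. Unset Printing Implicit Defensive.
Import GroupScope.

Definition psi (gT : finGroupType) (A : {set gT}) : nat := \sum_(x in A) #[x].

Definition psi_divisible (gT : finGroupType) (G : {group gT}) : Prop :=
  forall H : {group gT}, H \subset G -> psi H %| psi G.

(* G is (isomorphic to) the ZM-group ZM(m,n,r) = <a,b | a^m = b^n = 1, b^-1 a b = a^r>:
   G is generated by a, b satisfying the defining relations and has order m*n
   (the order of the presented group), hence G is isomorphic to it. *)
Definition is_ZM (gT : finGroupType) (G : {group gT}) (m n r : nat) (a b : gT) : Prop :=
  [/\ G :=: <<[set a; b]>>, a ^+ m = 1, b ^+ n = 1, a ^ b = a ^+ r & #|G| = (m * n)%N].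

(* Main.v *)
Require Import Defs.
From mathcomp Require Import all_boot all_order all_fingroup all_solvable.
From mathcomp Require Import zify.
Set Implicit Arguments. Unset Strict Implicit. Unset Printing Implicit Defensive.

Lemma logn_prod_pos s (F : 'I_s -> nat) q : (forall i, 0 < F i) ->
  logn q (\prod_(i < s) F i) = \sum_(i < s) logn q (F i).
Proof.
move=> Fpos.
have [] : 0 < \prod_(i < s) F i /\ logn q (\prod_(i < s) F i) = \sum_(i < s) logn q (F i).
  apply: (big_rec2 (fun su pr => 0 < pr /\ logn q pr = su)); first by rewrite logn1.
  move=> i su pr _ [pr0 <-]; split; first by rewrite muln_gt0 Fpos.
  by rewrite lognM ?Fpos.
by [].
Qed.

Lemma logn_bound s (q : 'I_s -> nat) (beta : 'I_s -> nat) p alpha t :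
  (forall i, prime (q i)) -> injective q ->
  \max_(i < s | q i %| p.-1) beta i <= alpha ->
  prime t -> t %| p.-1 -> logn t (\prod_(i < s) q i ^ beta i) <= alpha.
Proof.
move=> pq injq hmax pt tp.
rewrite logn_prod_pos; last by move=> i; rewrite expn_gt0 prime_gt0.
have E : forall i, logn t (q i ^ beta i) = beta i * (t == q i).
  by move=> i; rewrite lognX logn_prime.
case: (pickP (fun i => q i == t)) => [i0 /eqP qi0 | none].
  rewrite (bigD1 i0) //= big1 ?addn0.
    rewrite E qi0 eqxx muln1; apply: leq_trans hmax.
    by apply: (leq_bigmax_cond (P := fun i => q i %| p.-1)); rewrite qi0.
  move=> i ni; rewrite E; case: eqP => [et|]; last by rewrite muln0.
  by case/eqP: ni; apply: injq; rewrite -et qi0.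
rewrite big1 // => i _; rewrite E; case: eqP => [et|]; last by rewrite muln0.
by move: (none i); rewrite et eqxx.
Qed.

Lemma d_dvd n p alpha : prime p -> 0 < n ->
  (forall t, prime t -> t %| p.-1 -> logn t n <= alpha) ->
  n`_\pi(p.-1) %| (p.-1) ^ alpha.
Proof.
move=> pp n0 hlog.
have p1 : 0 < p.-1 by rewrite -subn1 subn_gt0 prime_gt1.
apply/dvdn_partP; first exact: part_gt0.
move=> t tin.
have := pnatPpi (part_pnat _ _) tin; rewrite mem_primes => /and3P[pt _ tp].
rewrite partn_part; last by move=> x; rewrite !inE => /eqP ->; rewrite mem_primes pt p1 tp.
rewrite p_part; apply: dvdn_trans (dvdn_exp2l t (hlog t pt tp)) _.
exact: dvdn_exp2r.
Qed.

Lemma rd_one n r p alpha : prime p -> 0 < alpha -> 0 < n -> coprime (p ^ alpha) n ->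
  r ^ n = 1 %[mod p ^ alpha] -> r ^ (n`_\pi(p.-1)) = 1 %[mod p ^ alpha].
Proof.
move=> pp a0 n0 cmn hr.
set m := p ^ alpha in cmn hr *.
have p1 : 0 < p.-1 by rewrite -subn1 subn_gt0 prime_gt1.
have m1 : 1 < m by rewrite /m -(expn0 p) ltn_exp2l ?prime_gt1.
have crm : coprime r m.
  by rewrite -(coprime_pexpl _ _ n0) -coprime_modl hr modn_small // coprime1n.
have heul := Euler_exp_totient crm.
set t := totient m in heul.
set g := gcdn n t.
have [u _ hu] := Bezoutl t n0.
have hg : r ^ g = 1 %[mod m].
  have e1 : r ^ (g + u * t) = 1 %[mod m].
    rewrite -(divnK hu) mulnC expnM -modnXm hr modnXm exp1n //.
  by rewrite -e1 expnD [u * t]mulnC expnM -modnMmr -[(r ^ t) ^ u %% m]modnXm heul modnXm exp1n modnMmr muln1.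
have gd : g %| n`_\pi(p.-1).
  have gp : g %| p.-1.
    have cgp : coprime g (p ^ alpha.-1).
      apply: coprime_dvdl (dvdn_gcdl n t) _.
      rewrite coprime_sym; apply: coprimeXl.
      by move: cmn; rewrite /m coprime_pexpl.
    by rewrite -(Gauss_dvdl _ cgp) -totient_pfactor // dvdn_gcdr.
  rewrite -(part_pnat_id (pnat_dvd gp (pnat_pi p1))).
  by apply: partn_dvd => //; apply: dvdn_gcdl.
by rewrite -(divnK gd) mulnC expnM -modnXm hg modnXm exp1n.
Qed.

Lemma leq_exp_base a b k : a <= b -> a ^ k <= b ^ k.
Proof. by move=> h; elim: k => // k IH; rewrite !expnS leq_mul. Qed.

Lemma final_ineq p alpha : prime p -> 0 < alpha ->
  (p.-1) ^ alpha * (p.-1) ^ alpha < totient (p ^ alpha) * p ^ alpha.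
Proof.
move=> pp a0; rewrite totient_pfactor //.
have p1 : 0 < p.-1 by rewrite -subn1 subn_gt0 prime_gt1.
rewrite -{1}(prednK a0) expnS -!mulnA ltn_pmul2l //.
apply: (leq_ltn_trans (leq_mul (leq_exp_base _ (leq_pred p)) (leqnn _))).
by rewrite ltn_pmul2l ?expn_gt0 ?prime_gt0 // ltn_exp2r // ltn_predL prime_gt0.
Qed.

Section S.
Variable gT : finGroupType.
Implicit Types X Y : {set gT}.
Local Open Scope group_scope.
Lemma psi_mulTI (X Y : {group gT}) : X :&: Y = 1 ->
  psi (X * Y) = \sum_(y in Y) \sum_(x in X) #[x * y].
Proof.
move=> tiXY.
have -> : X * Y = [set x * y | x in X, y in Y] by [].
rewrite /psi curry_imset2X big_imset /=; last first.
  move=> [x1 y1] [x2 y2] /setXP[Xx1 Yy1] /setXP[Xx2 Yy2] /= E.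
  have Hx : x2^-1 * x1 = y2 * y1^-1 by rewrite -(mulgK y1 x1) E !mulgA mulVg mul1g.
  have : x2^-1 * x1 \in X :&: Y by rewrite inE groupM ?groupV //= Hx groupM ?groupV.
  rewrite tiXY => /set1P H1.
  have ex : x1 = x2 by apply: (mulgI x2^-1); rewrite H1 mulVg.
  by subst x2; move: E => /mulgI ->.
rewrite exchange_big pair_big_dep /=.
by apply: eq_big => [[x y]|[x y] _]; rewrite ?in_setX.
Qed.

Lemma psi_coprime_mul (X Y : {group gT}) : X \subset 'C(Y) -> coprime #|X| #|Y| ->
  psi (X * Y) = (psi X * psi Y)%N.
Proof.
move=> cXY coXY; rewrite psi_mulTI ?coprime_TIg // /psi big_distrr /=.
apply: eq_bigr => y Yy; rewrite mulnC big_distrr /=.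
apply: eq_bigr => x Xx; rewrite orderM.
- by rewrite mulnC.
- exact: (centsP cXY x Xx y Yy).
apply: coprime_dvdl (order_dvdG Xx) _; exact: coprime_dvdr (order_dvdG Yy) _.
Qed.

Lemma psi_le_card (X : {group gT}) : psi X <= (#|X| * #|X|)%N.
Proof.
rewrite /psi -sum_nat_const; apply: leq_sum => x Xx.
exact: dvdn_leq (cardG_gt0 X) (order_dvdG Xx).
Qed.

Lemma psi_proper (X Y : {set gT}) : X \proper Y -> psi X < psi Y.
Proof.
case/properP=> sXY [z Yz nXz].
rewrite /psi [in X in _ < X](big_setID X) /= (setIidPr sXY) -addn1 leq_add2l.
rewrite (bigD1 z) ?inE ?Yz ?nXz //=; exact: leq_trans (order_gt0 z) (leq_addr _ _).
Qed.

Lemma psi_sub (X Y : {set gT}) : X \subset Y -> psi X <= psi Y.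
Proof.
move=> sXY; rewrite /psi [in X in _ <= X](big_setID X) /= (setIidPr sXY) leq_addr //.
Qed.


Lemma pgroup_cyc_bottom (a : gT) p k (X : {group gT}) : prime p -> #[a] = (p ^ k)%N ->
  X \subset <[a]> -> X :!=: 1 -> a ^+ (#[a] %/ p) \in X.
Proof.
move=> pr_p oa sXa ntX.
have : #|X| %| p ^ k by rewrite -oa cardSg.
case/(dvdn_pfactor _ _ pr_p) => j ljk oX.
have j0 : 0 < j.
  case: j oX {ljk} => // oX; move: ntX; by rewrite trivg_card1 oX.
have pX : p %| #|X| by rewrite oX dvdn_exp // ?(leq_trans _ j0).
have [x Xx ox] := Cauchy pr_p pX.
have pa : p %| #[a] by rewrite oa dvdn_exp // (leq_trans j0 ljk).
have := cycle_sub_group pa.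
have sxa : <[x]> \subset <[a]> by rewrite cycle_subG (subsetP sXa).
move/setP/(_ <[x]>%G); rewrite !inE /= sxa (_ : #|<[x]>| = p) // eqxx /=.
move=> /esym/eqP ex.
have : a ^+ (#[a] %/ p) \in <[x]>%G by rewrite ex cycle_id.
by apply: subsetP; rewrite cycle_subG.
Qed.

Lemma noncentral_order (a y : gT) p k : prime p -> #[a] = (p ^ k)%N ->
  y \in 'N(<[a]>) -> coprime #[a] #[y] -> y \notin 'C[a] ->
  forall x, x \in <[a]> -> #[x * y] = #[y].
Proof.
move=> pr_p oa nAy coAy nCy.
have nAY : <[y]> \subset 'N(<[a]>) by rewrite cycle_subG.
have TI := coprime_abel_cent_TI nAY coAy (cycle_abelian a).
have k0 : 0 < k.
  case: k oa => // oa; case/negP: nCy; apply/cent1P.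
  have -> : a = 1 by apply/eqP; rewrite -order_eq1 oa.
  exact: commute1.
set z := a ^+ (#[a] %/ p).
have pa : p %| #[a] by rewrite oa dvdn_exp.
have ea : #[a] = (#[a] %/ p * p)%N by rewrite divnK.
have tz : 0 < #[a] %/ p by rewrite divn_gt0 ?prime_gt0 // dvdn_leq.
have oz : #[z] = p.
  rewrite /z orderXdiv; first by rewrite {1}ea mulKn.
  by rewrite {2}ea dvdn_mulr.
have nz : z != 1 by rewrite -order_eq1 oz; case: (p) pr_p => [|[]].
have tiC : 'C_(<[a]>)[y] = 1.
  apply/eqP/negPn/negP => ntC.
  have zC : z \in 'C_(<[a]>)[y] := pgroup_cyc_bottom (X := 'C_(<[a]>)[y]%G) pr_p oa (subsetIl _ _) ntC.
  have ntR : [~: <[a]>, <[y]>] != 1.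
    apply/negP => /eqP/commG1P cAY; case/negP: nCy; apply/cent1P.
    have : a \in 'C(<[y]>) by apply: (subsetP cAY); rewrite cycle_id.
    by rewrite cent_cycle => /cent1P /commute_sym.
  have zR : z \in [~: <[a]>, <[y]>].
    by apply: (pgroup_cyc_bottom (X := [~: <[a]>, <[y]>]%G) pr_p oa) => //; rewrite commg_subl.
  have : z \in 'C_([~: <[a]>, <[y]>])(<[y]>).
    by rewrite inE zR cent_cycle; case/setIP: zC.
  by rewrite TI => /set1P; apply/eqP.
pose f := fun w => y ^ w.
have injf : {in <[a]> &, injective f}.
  move=> w1 w2 Aw1 Aw2 E.
  have : w1 * w2^-1 \in 'C_(<[a]>)[y].
    rewrite inE groupM ?groupV //=; apply/cent1P; apply/commute_sym.
    have H : y ^ (w1 * w2^-1) = y by rewrite conjgM [y ^ w1]E conjgK.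
    by rewrite /commute -[in RHS]H /conjg !mulgA mulgV mul1g.
  by rewrite tiC => /set1P /eqP; rewrite mulg_eq1 => /eqP ->; rewrite invgK.
have sfA : f @: <[a]> \subset <[a]> :* y.
  apply/subsetP => _ /imsetP[w Aw ->]; rewrite mem_rcoset /f.
  have -> : y ^ w * y^-1 = w^-1 * w ^ y^-1 by rewrite /conjg invgK !mulgA.
  by rewrite groupM ?groupV // memJ_norm ?groupV.
have efA : f @: <[a]> = <[a]> :* y.
  by apply/eqP; rewrite eqEcard sfA card_rcoset (card_in_imset injf) leqnn.
move=> x Ax.
have : x * y \in f @: <[a]> by rewrite efA mem_rcoset mulgK.
by case/imsetP => w _ ->; rewrite /f orderJ.
Qed.

Lemma psi_AC (a : gT) p k (C : {group gT}) : prime p -> #[a] = (p ^ k)%N ->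
  <[a]> :&: C = 1 -> C \subset 'N(<[a]>) -> coprime #[a] #|C| ->
  psi (<[a]> * C) = (psi <[a]> * \sum_(y in C | y \in 'C[a]) #[y]
                      + #[a] * \sum_(y in C | y \notin 'C[a]) #[y])%N.
Proof.
move=> pr_p oa ti nAC coAC; rewrite psi_mulTI // (bigID (fun y => y \in 'C[a])) /=.
rewrite !big_distrr /=; congr (_ + _)%N; apply: eq_bigr => y /andP[Cy cy].
  rewrite /psi big_distrl /=; apply: eq_bigr => x Ax; rewrite orderM.
  - by [].
  - by case/cycleP: Ax => i ->; apply/commute_sym; apply: commuteX; apply/cent1P.
  apply: coprime_dvdl (order_dvdG Ax) _; exact: coprime_dvdr (order_dvdG Cy) _.
rewrite -sum_nat_const; apply: eq_bigr => x Ax.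
apply: (noncentral_order pr_p oa) => //.
  exact: (subsetP nAC).
exact: coprime_dvdr (order_dvdG Cy) _.
Qed.

Lemma psiA_coprime (a : gT) p k : prime p -> #[a] = (p ^ k)%N -> coprime (psi <[a]>) p.
Proof.
move=> pp oa; rewrite /psi (bigD1 1) ?group1 //= order1.
have hr : p %| \sum_(i in <[a]> | i != 1) #[i].
  apply: dvdn_sum => x /andP[Ax nx].
  have : #[x] %| p ^ k by rewrite -oa order_dvdG.
  case/(dvdn_pfactor _ _ pp) => j _ ox.
  move: ox nx; case: j => [|j] ox; last by rewrite ox expnS dvdn_mulr.
  by rewrite -order_eq1 ox expn0.
rewrite coprime_sym prime_coprime // (dvdn_addl 1 hr) dvdn1.
by case: eqP pp => // ->.
Qed.

Lemma psiA_lb (a : gT) : (totient #[a] * #[a] <= psi <[a]>)%N.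
Proof.
rewrite totient_gen -sum_nat_const.
apply: leq_trans (psi_sub (X := [set x | generator <[a]> x]) _).
  by apply: eq_leq; apply: eq_bigr => x; rewrite inE => /generator_order.
by apply/subsetP => x; rewrite inE; apply: cycle_generator.
Qed.


Lemma fix_commute (x u : gT) : x ^ u = x -> commute x u.
Proof. by move=> H; rewrite /commute -[in RHS]H /conjg !mulgA mulgV mul1g. Qed.

Lemma main_lemma (G : {group gT}) (a b : gT) (m n r p alpha : nat) :
  (0 < m)%N -> (0 < n)%N -> (0 < r)%N -> coprime m n -> coprime m (r - 1) ->
  (r ^ n = 1 %[mod m])%N ->
  G :=: <<[set a; b]>> -> a ^+ m = 1 -> b ^+ n = 1 -> a ^ b = a ^+ r -> #|G| = (m * n)%N ->
  prime p -> (0 < alpha)%N -> m = (p ^ alpha)%N ->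
  (forall t, prime t -> t %| p.-1 -> logn t n <= alpha)%N -> ~ psi_divisible G.
Proof.
move=> m0 n0 r0 cmn cmr hr eqG am bn abr cardG pp a0 em hlog psid.
have m1 : (1 < m)%N by rewrite em -(expn0 p) ltn_exp2l ?prime_gt1.
have nAB : <[b]> \subset 'N(<[a]>) by rewrite norms_cycle abr mem_cycle.
have eGAB : G :=: <[a]> * <[b]>.
  rewrite -norm_joinEr // eqG; apply/eqP; rewrite eqEsubset; apply/andP; split.
    rewrite gen_subG; apply/subsetP => x; rewrite !inE => /orP[]/eqP ->;
      by rewrite mem_gen // inE cycle_id ?orbT.
  by rewrite join_subG !cycle_subG !mem_gen // !inE eqxx ?orbT.
have oao : #[a] %| m by rewrite order_dvdn am.
have obo : #[b] %| n by rewrite order_dvdn bn.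
have hcard := mul_cardG <[a]>%G <[b]>%G.
rewrite /= -eGAB cardG in hcard.
have ti1 : (0 < #|<[a]> :&: <[b]>|)%N by rewrite (cardG_gt0 (<[a]> :&: <[b]>)%G).
have la := dvdn_leq m0 oao; have lb := dvdn_leq n0 obo.
have hab : (#[a] * #[b] <= m * n)%N := leq_mul la lb.
have mn0 : (0 < m * n)%N by rewrite muln_gt0 m0.
have hc1 : #|<[a]> :&: <[b]>| = 1%N.
  apply/eqP; rewrite eqn_leq ti1 andbT -(leq_pmul2l mn0) muln1 -hcard //.
have hab' : (#[a] * #[b] = m * n)%N by rewrite hcard hc1 muln1.
have oa : #[a] = m.
  apply/eqP; rewrite eqn_leq la /=; rewrite leqNgt; apply/negP => lt.
  have : (#[a] * #[b] < m * n)%N.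
    by apply: (leq_trans (_ : _ < m * #[b])%N); rewrite ?ltn_pmul2r ?order_gt0 ?leq_mul2l ?lb ?orbT.
  by rewrite hab' ltnn.
have ob : #[b] = n.
  by apply/eqP; rewrite -(eqn_pmul2l m0) -{1}oa hab'.
have tiAB : <[a]> :&: <[b]> = 1.
  by apply/eqP; rewrite (trivg_card1 (<[a]> :&: <[b]>)%G) /= hc1.
pose pi := \pi(p.-1).
pose d := (n`_pi)%N. pose e := (n`_pi^')%N.
have de : (d * e)%N = n by rewrite /d /e partnC.
have cde : coprime d e by apply: coprime_partC.
have d0 : (0 < d)%N by apply: part_gt0.
have e0 : (0 < e)%N by apply: part_gt0.
have rd : (r ^ d = 1 %[mod m])%N.
  by rewrite em; apply: rd_one => //; rewrite -em.
have dle : d %| (p.-1) ^ alpha by apply: d_dvd.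
have conjX : forall k, a ^ (b ^+ k) = a ^+ (r ^ k)%N.
  elim => [|k IH]; first by rewrite expg0 conjg1 expn0 expg1.
  by rewrite expgSr conjgM IH conjXg abr -expgM expnS.
have bdC : b ^+ d \in 'C[a].
  apply/cent1P/commute_sym/fix_commute.
  by rewrite conjX -(expg_mod_order a) oa rd modn_small // expg1.
have bnC : b \notin 'C[a].
  apply/negP => /cent1P cab.
  have : a ^ b = a by rewrite /conjg -cab mulKg.
  rewrite abr => har.
  have : a ^+ (r - 1) * a = 1 * a by rewrite mul1g -expgSr subn1 prednK.
  move/mulIg/eqP; rewrite -order_dvdn oa => /gcdn_idPl.
  move=> hg; move: cmr; rewrite /coprime hg => /eqP m_1; by move: m1; rewrite m_1.
pose B1 := <[b ^+ d]>%G. pose B2 := <[b ^+ e]>%G.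
have ob1 : #|B1| = e.
  change (#[b ^+ d] = e); by rewrite orderXdiv ob -?de ?mulKn // dvdn_mulr.
have ob2 : #|B2| = d.
  change (#[b ^+ e] = d); by rewrite orderXdiv ob -?de ?mulnK // dvdn_mull.
have sB1 : B1 \subset <[b]> by apply: cycleX.
have sB2 : B2 \subset <[b]> by apply: cycleX.
have cB12 : B1 \subset 'C(B2).
  exact: subset_trans sB1 (subset_trans (cycle_abelian b) (centS sB2)).
have eB : <[b]> = B1 * B2.
  apply/eqP; rewrite eq_sym eqEcard mulG_subG sB1 sB2 andTb.
  rewrite TI_cardMg; last by apply: coprime_TIg; rewrite ob1 ob2 coprime_sym.
  by rewrite ob1 ob2 mulnC de andTb -ob.
have psiB : psi <[b]> = (psi B1 * psi B2)%N.
  by rewrite eB psi_coprime_mul // ob1 ob2 coprime_sym.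
pose L := 'C_(B2)[a]%G.
have sB1C : B1 \subset 'C[a] by rewrite cycle_subG.
have eK : B1 * L = 'C_(<[b]>)[a] by rewrite /L /= group_modl // -eB.
have psiK : psi 'C_(<[b]>)[a] = (psi B1 * psi L)%N.
  rewrite -eK psi_coprime_mul //.
    exact: subset_trans cB12 (centS (subsetIl _ _)).
  by rewrite ob1 (coprime_dvdr (cardSg (subsetIl B2 _))) // ob2 coprime_sym.
pose S' := (\sum_(y in <[b]> | y \notin 'C[a]) #[y])%N.
have psiBs : psi <[b]> = (psi 'C_(<[b]>)[a] + S')%N.
  rewrite /psi (bigID (fun y => y \in 'C[a])) /=; congr (_ + _)%N.
  by apply: eq_bigl => y; rewrite in_setI.
have psiG : psi G = (psi <[a]> * psi 'C_(<[b]>)[a] + m * S')%N.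
  have cob : coprime #[a] #[b] by rewrite oa ob.
  rewrite eGAB (psi_AC pp (etrans oa em) tiAB nAB cob) oa; congr (_ + _)%N; congr (_ * _)%N.
  by rewrite /psi; apply: eq_bigl => y; rewrite in_setI.
have nAB1 : B1 \subset 'N(<[a]>) := subset_trans sB1 nAB.
pose H := (<[a]> <*> B1)%G.
have eH : H :=: <[a]> * B1 by rewrite /= norm_joinEr.
have psiH : psi H = (psi <[a]> * psi B1)%N.
  rewrite eH (psi_AC pp (etrans oa em)) //.
  - have z : (\sum_(y in B1 | y \notin 'C[a]) #[y] = 0)%N.
      by apply: big1 => y /andP[/(subsetP sB1C) ->].
    rewrite z muln0 addn0.
    congr (_ * _)%N; apply: eq_bigl => y; case Hy: (y \in B1) => //=.
    exact: (subsetP sB1C).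
  - by apply/trivgP; rewrite -tiAB setIS.
  by rewrite oa ob1 (coprime_dvdr _ cmn) // -de dvdn_mull.
have sHG : H \subset G by rewrite eH eGAB mulgS.
have := psid H sHG; rewrite psiH psiG psiK.
move=> hdiv.
set P := psi <[a]> in hdiv *; set u := psi B1 in hdiv psiB psiK *.
set v := psi B2 in psiB; set w := psi L in psiK hdiv.
have u0 : (0 < u)%N by rewrite /u /psi (bigD1 1) //= order1.
have S'e : S' = (u * (v - w))%N by rewrite mulnBr -psiB psiBs psiK addKn.
have h1 : (P * u %| P * (u * w))%N by rewrite mulnA dvdn_mulr.
rewrite (dvdn_addr _ h1) S'e mulnCA [(u * _)%N]mulnC (dvdn_pmul2r u0) in hdiv.
have cPm : coprime P m by rewrite em coprime_pexpr // (psiA_coprime pp (etrans oa em)).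
rewrite Gauss_dvdr // in hdiv.
have ntL : L \proper B2.
  rewrite properEneq subsetIl andbT; apply/negP => /eqP eLB2.
  have : <[b]> \subset 'C[a].
    by rewrite eB mulG_subG sB1C /= -eLB2 subsetIr.
  by rewrite cycle_subG (negPf bnC).
have wv : (w < v)%N by apply: psi_proper.
have hP : (P <= v - w)%N by apply: dvdn_leq; rewrite ?subn_gt0.
have : (v - w < P)%N.
  apply: leq_ltn_trans (leq_subr _ _) _.
  apply: leq_ltn_trans (psi_le_card B2) _; rewrite ob2.
  have dd : (d <= (p.-1) ^ alpha)%N.
    by apply: dvdn_leq dle; rewrite expn_gt0 -subn1 subn_gt0 prime_gt1.
  apply: leq_ltn_trans (leq_mul dd dd) _.
  apply: leq_trans (final_ineq pp a0) _.
  by rewrite -em -oa psiA_lb.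
by rewrite ltnNge hP.
Qed.
End S.

Theorem proposition2p4 (gT : finGroupType) (G : {group gT}) (a b : gT)
    (m n r p alpha s : nat) (q beta : 'I_s -> nat) :
    0 < m -> 0 < n -> 0 < r ->
    coprime m n -> coprime m (r - 1) -> r ^ n = 1 %[mod m] ->
    is_ZM G m n r a b ->
    prime p -> 0 < alpha -> m = p ^ alpha ->
    (forall i, prime (q i)) -> injective q -> (forall i, 0 < beta i) ->
    n = \prod_(i < s) q i ^ beta i ->
    \max_(i < s | q i %| p.-1) beta i <= alpha ->
    ~ psi_divisible G.
Proof.
move=> m0 n0 r0 cmn cmr hr [eqG am bn abr cardG] pp a0 em hq injq hb en hmax.
apply: (main_lemma m0 n0 r0 cmn cmr hr eqG am bn abr cardG pp a0 em).
by move=> t pt tp; rewrite en; exact: (logn_bound hq injq hmax pt tp).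
Qed.
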